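(* Let $\kappa\ge1$, $n\ge1$ be integers and $0<\epsilon<1$. Let $\mathcal{C}=\{q\in\mathbb{R}^{2^\kappa}: q_i\ge0\ \forall i,\ \sum_{i=0}^{2^\kappa-1}q_i=1\}$. If $q\in\mathcal{C}$ is a local minimizer of $q\mapsto\lambda(n,\epsilon,q)$ on $\mathcal{C}$, then $q_0=0$.
   Context: $W=\mathbb{F}_2^\kappa$; $\nu(i)\in W$ is the binary expansion of $i\in\{0,\dots,2^\kappa-1\}$; vectors $q$ are indexed $q_0,\dots,q_{2^\kappa-1}$. For a subspace $S\subseteq W$, $\zeta(S,q)=\sum_{i:\nu(i)\in S}q_i$; $\Xi(W,\kappa-1)$ is the set of $(\kappa-1)$-dimensional subspaces of $W$. For real $q$ define $\lambda(n,\epsilon,q)=(2-\epsilon)^n2^{-\kappa}\Big(1+\sum_{S\in\Xi(W,\kappa-1)}\big(\tfrac{\epsilon}{2-\epsilon}\big)^{n(1-\zeta(S,q))}\Big)-1$ (for $q$ the column-distribution vector of a generator matrix, this is the $\chi^2$ divergence between $p_{MZ}$ and $p_Mp_Z$ for the coset code over a binary erasure channel with erasure probability $\epsilon$). A local minimizer of $f$ on $\mathcal{C}$ is a point $q\in\mathcal{C}$ with $f(q)\le f(q')$ for all $q'\in\mathcal{C}$ in some neighborhood of $q$. *)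

(* Defs.v *)
From HB Require Import structures.
From mathcomp Require Import all_boot all_order all_algebra.
From mathcomp Require Import all_classical all_reals all_analysis.
Set Implicit Arguments. Unset Strict Implicit. Unset Printing Implicit Defensive.
Import Order.TTheory GRing.Theory Num.Theory.
Local Open Scope ring_scope.

Notation W kappa := 'rV['F_2]_kappa.

Definition nu (kappa : nat) (i : 'I_(2 ^ kappa)) : W kappa :=
  \row_(j < kappa) (((i %/ 2 ^ j) %% 2)%N)%:R.

(* S (a finite set of vectors) is a (kappa-1)-dimensional subspace of W:
   S coincides with the F_2-linear span of its elements, and that span has
   dimension kappa-1. *)
Definition is_hyperplane (kappa : nat) (S : {set W kappa}) : bool :=
  (S == [set x | x \in (<<enum S>>)%VS]) && (\dim (<<enum S>>)%VS == kappa.-1)%N.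

Definition zeta (R : realType) (kappa : nat) (S : {set W kappa})
  (q : 'I_(2 ^ kappa) -> R) : R :=
  \sum_(i < 2 ^ kappa | nu i \in S) q i.

Definition lambda (R : realType) (kappa n : nat) (eps : R)
  (q : 'I_(2 ^ kappa) -> R) : R :=
  (2 - eps) ^+ n * ((2 ^ kappa)%N%:R)^-1 *
  (1 + \sum_(S : {set W kappa} | is_hyperplane S)
         powR (eps / (2 - eps)) (n%:R * (1 - zeta S q))) - 1.

Definition in_simplex (R : realType) (kappa : nat) (q : 'I_(2 ^ kappa) -> R) : Prop :=
  (forall i, 0 <= q i) /\ \sum_(i < 2 ^ kappa) q i = 1.

(* local minimizer of f on C (neighbourhoods in the sup-norm, equivalent to
   the Euclidean topology on R^(2^kappa)) *)
Definition local_min_on (R : realType) (kappa : nat)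
  (C : ('I_(2 ^ kappa) -> R) -> Prop) (f : ('I_(2 ^ kappa) -> R) -> R)
  (q : 'I_(2 ^ kappa) -> R) : Prop :=
  C q /\ exists delta : R, 0 < delta /\
    forall q', C q' -> (forall i, `|q' i - q i| < delta) -> f q <= f q'.

Lemma pow2_gt0 (kappa : nat) : (0 < 2 ^ kappa)%N.
Proof. by rewrite expn_gt0. Qed.

Definition idx0 (kappa : nat) : 'I_(2 ^ kappa) := Ordinal (pow2_gt0 kappa).

(* Main.v *)
Require Import Defs.
From HB Require Import structures.
From mathcomp Require Import all_boot all_order all_algebra.
From mathcomp Require Import all_classical all_reals all_analysis.
From mathcomp Require Import lra.
Import Order.TTheory GRing.Theory Num.Theory.
Local Open Scope ring_scope.
Section A.
Variable k : nat.
Definition g (v : 'rV['F_2]_k.+1) : ('F_2)^o := v ord0 ord0.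
Lemma g_lin : linear g. Proof. by move=> a u v; rewrite /g !mxE. Qed.
HB.instance Definition _ := GRing.isLinear.Build _ _ _ _ g g_lin.
Definition f : 'Hom('rV['F_2]_k.+1, ('F_2)^o) := linfun g.
Lemma fE v : f v = v ord0 ord0. Proof. by rewrite lfunE. Qed.

Definition S0 : {set W k.+1} := [set x | x \in lker f].

Lemma span_S0 : (<<enum S0>> = lker f)%VS.
Proof.
apply/eqP; rewrite eqEsubv; apply/andP; split.
  by apply/span_subvP => x; rewrite mem_enum inE.
apply/subvP => x Hx; apply: memv_span; by rewrite mem_enum inE.
Qed.

Lemma S0_hyp : is_hyperplane S0.
Proof.
rewrite /is_hyperplane span_S0; apply/andP; split.
  by apply/eqP/setP => x; rewrite !inE.
have H1 : \dim (f @: fullv) = 1%N.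
  apply/eqP; rewrite eqn_leq; apply/andP; split.
    by have := dimvS (subvf (f @: fullv)); rewrite dimvf.
  rewrite lt0n dimv_eq0; apply/negP => /eqP H.
  have : f (const_mx 1) \in (f @: fullv)%VS by apply: memv_img; exact: memvf.
  by rewrite H memv0 fE mxE.
have := limg_ker_dim f fullv.
rewrite capfv dimvf H1 /dim /= addn1 mul1n => H.
by case: H => ->.
Qed.

Lemma j1_lt : (1 < 2 ^ k.+1)%N.
Proof. by rewrite -[X in (X < _)%N]/(2 ^ 0)%N ltn_exp2l. Qed.
Definition j1 : 'I_(2 ^ k.+1) := Ordinal j1_lt.

Lemma nu_j1_notin : nu j1 \notin S0.
Proof. by rewrite inE memv_ker fE mxE. Qed.

Lemma j1_neq : j1 != idx0 k.+1.
Proof. by []. Qed.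
End A.

Lemma nu_idx0_in kappa (S : {set W kappa}) : is_hyperplane S -> nu (idx0 kappa) \in S.
Proof.
move=> /andP[/eqP HS _].
have -> : nu (idx0 kappa) = 0 by apply/rowP => j; rewrite !mxE div0n mod0n.
by rewrite HS inE mem0v.
Qed.

Lemma sum_ind (R : realType) (T : finType) (P : pred T) (a : T) (c : R) :
  \sum_(i | P i) (i == a)%:R * c = (P a)%:R * c.
Proof.
rewrite big_mkcond (bigD1 a) //= eqxx mul1r big1 ?addr0.
  by case: (P a); rewrite ?mul1r ?mul0r.
by move=> i /negbTE ->; rewrite mul0r; case: (P i).
Qed.

Lemma powR_lt (R : realType) (a x y : R) : 0 < a < 1 -> x < y -> a `^ y < a `^ x.
Proof.
move=> /andP[a0 a1] xy.
have ea : expR (ln a) = a by apply/eqP; rewrite lnK_eq.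
rewrite -ea -!expRM ltr_expR ltr_nM2l //.
by apply: ln_lt0; rewrite a0 a1.
Qed.

Theorem theorem6 (R : realType) (kappa n : nat) (eps : R) :
  (1 <= kappa)%N -> (1 <= n)%N -> 0 < eps -> eps < 1 ->
  forall q : 'I_(2 ^ kappa) -> R,
    local_min_on (@in_simplex R kappa) (lambda n eps) q ->
    q (idx0 kappa) = 0.
Proof.
case: kappa => [//|k] _ n1 e0 e1 q [[qge0 qsum] [delta [d0 Hmin]]].
set q0 := q (idx0 k.+1).
have : 0 <= q0 by apply: qge0.
rewrite le0r => /orP[/eqP //|q0pos]; exfalso.
have i0j : (idx0 k.+1 == j1 k) = false by [].
set t := Num.min q0 (delta / 2).
have t0 : 0 < t by rewrite lt_min q0pos divr_gt0.
have tq0 : t <= q0 by rewrite ge_min lexx.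
have td : t < delta.
  apply: (le_lt_trans (y := delta / 2)); first by rewrite ge_min lexx orbT.
  by rewrite ltr_pdivrMr // ltr_pMr // ltr1n.
pose q' := fun i => q i - (i == idx0 k.+1)%:R * t + (i == j1 k)%:R * t.
have Hz : forall S : {set W k.+1}, zeta S q' =
   zeta S q - (nu (idx0 k.+1) \in S)%:R * t + (nu (j1 k) \in S)%:R * t.
  move=> S; rewrite /zeta /q' big_split big_split /= sumrN.
  by rewrite !(@sum_ind R _ (fun i => nu i \in S)).
have simp' : in_simplex q'.
  split.
    move=> i; rewrite /q'; case: (eqVneq i (idx0 k.+1)) => [->|ne]; rewrite ?eqxx ?(negbTE ne).
      by rewrite i0j mul1r mul0r addr0 subr_ge0.
    by rewrite mul0r subr0 addr_ge0 // mulr_ge0 // ltW.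
  rewrite /q' big_split big_split /= sumrN qsum.
  by rewrite !(@sum_ind R _ xpredT) /= mul1r addrNK.
have close : forall i, `|q' i - q i| < delta.
  move=> i; rewrite /q' addrAC [q i - _]addrC addrK.
  case: (eqVneq i (idx0 k.+1)) => [->|ne].
    by rewrite ?eqxx i0j mul1r mul0r addr0 normrN gtr0_norm.
  rewrite ?(negbTE ne) mul0r oppr0 add0r; case: (i == j1 k); rewrite ?mul1r ?mul0r ?normr0 ?gtr0_norm //.

have := Hmin q' simp' close.
apply/negP; rewrite -ltNge.
set a := eps / (2 - eps).
have e2 : 0 < 2 - eps by lra.
have a01 : 0 < a < 1.
  by rewrite divr_gt0 //= ltr_pdivrMr // mul1r; lra.
have nR : 0 < n%:R :> R by rewrite ltr0n.
have Hle : forall S : {set W k.+1}, is_hyperplane S ->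
    a `^ (n%:R * (1 - zeta S q')) <= a `^ (n%:R * (1 - zeta S q)).
  move=> S HS; rewrite Hz nu_idx0_in // mul1r.
  case: (nu (j1 k) \in S); rewrite ?mul1r ?subrK // mul0r addr0.
  by apply/ltW/powR_lt => //; rewrite ltr_pM2l //; lra.
have Hlt : a `^ (n%:R * (1 - zeta (S0 k) q')) < a `^ (n%:R * (1 - zeta (S0 k) q)).
  apply: powR_lt => //; rewrite Hz nu_idx0_in ?S0_hyp // (negbTE (nu_j1_notin k)).
  by rewrite mul1r mul0r addr0 ltr_pM2l //; lra.
rewrite /lambda ltrD2r ltr_pM2l; last first.
  by rewrite mulr_gt0 ?invr_gt0 ?ltr0n ?expn_gt0 // exprn_gt0.
rewrite ltrD2l -/a (bigD1 (S0 k)) ?S0_hyp //= [X in _ < X](bigD1 (S0 k)) ?S0_hyp //=.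
by apply: ltr_leD => //; apply: ler_sum => S /andP[HS _]; apply: Hle.
Qed.
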